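(* For all integers $N,p\ge1$, $$\delta_p(2,N)=\frac{1}{2^{p-1}}\sum_{k\ge0}\binom{p}{2k}\int_{\mathbb T^N}\left|\frac{q_1+\cdots+q_N}{N}\right|^{2k}dq,$$ where $dq$ is the normalized Haar (uniform) measure on $\mathbb T^N$.
   Context: For integers $M,N,p\ge1$, $\delta_p(M,N)=\frac{1}{(MN)^p}\#\{(a,b)\in\mathbb Z_M^p\times\mathbb Z_N^p:\{(a_y,b_y)\}_{y=1}^p=\{(a_y,b_{y+1})\}_{y=1}^p\text{ as multisets}\}$, with $b_{p+1}=b_1$. *)

(* Defs.v *)
From HB Require Import structures.
From mathcomp Require Import all_boot.
From Stdlib Require Import Reals ClassicalEpsilon.

Set Implicit Arguments.
Unset Strict Implicit.
Unset Printing Implicit Defensive.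

(* Number of (a,b) in Z_M^p x Z_N^p (Z_M represented by 'I_M) such that the
   multisets {(a_y,b_y)}_y and {(a_y,b_{y+1})}_y coincide, indices mod p
   (ordS = cyclic successor on 'I_p). *)
Definition delta_count (M N p : nat) : nat :=
  #|[set ab : {ffun 'I_p -> 'I_M} * {ffun 'I_p -> 'I_N} |
      perm_eq [seq (ab.1 y, ab.2 y) | y <- enum 'I_p]
              [seq (ab.1 y, ab.2 (ordS y)) | y <- enum 'I_p]]|.

Open Scope R_scope.

Definition delta (p M N : nat) : R :=
  INR (delta_count M N p) / (INR M * INR N) ^ p.

(* The Riemann integral of f over [0,1] (junk value if f is not integrable). *)
Definition int01 (f : R -> R) : R :=
  epsilon (inhabits 0)
    (fun I => forall pr : Riemann_integrable f 0 1, RiemannInt pr = I).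

Definition upd (th : nat -> R) (n : nat) (t : R) : nat -> R :=
  fun j => if Nat.eqb j n then t else th j.

(* Iterated integral over [0,1]^n of F, a function of the coordinates
   th 0, ..., th (n-1): this is the integral against the normalized Haar
   measure of T^n under q_j = exp(2 pi i th_j). *)
Fixpoint torus_int (n : nat) (F : (nat -> R) -> R) : R :=
  match n with
  | O => F (fun _ => 0)
  | S m => int01 (fun t => torus_int m (fun th => F (upd th m t)))
  end.

Definition rsum (N : nat) (f : nat -> R) : R := foldr Rplus 0 (map f (iota 0 N)).

Definition mean_abs (N : nat) (th : nat -> R) : R :=
  let re := rsum N (fun j => cos (2 * PI * th j)) / INR N in
  let im := rsum N (fun j => sin (2 * PI * th j)) / INR N in
  sqrt (re ^ 2 + im ^ 2).

(* Main.v *)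
Require Import Defs.
From HB Require Import structures.
From mathcomp Require Import all_boot.

Close Scope R_scope.

Lemma cnt_map (T : finType) (X : eqType) (f : T -> X) (x : X) :
  count_mem x [seq f y | y <- enum T] = #|[pred y | f y == x]|.
Proof.
rewrite count_map -sum1_count big_enum_cond /= sum1_card.
apply: eq_card => y. by rewrite !inE.
Qed.

Lemma perm_eq_count (X : eqType) (s1 s2 : seq X) :
  perm_eq s1 s2 <-> (forall x, count_mem x s1 = count_mem x s2).
Proof.
split.
- by move/permP => H x; apply: H.
- move=> H. rewrite /perm_eq. apply/allP => x _. by rewrite /= H.
Qed.

Lemma card_pred_shift p (P : 'I_p -> bool) :
  #|[pred y | P (ordS y)]| = #|[pred y | P y]|.
Proof.
rewrite -!sum1_card (reindex_inj (can_inj (@ord_predK p))) /=.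
apply: eq_bigl => y. by rewrite !inE ord_predK.
Qed.

Lemma I2_cases (i : 'I_2) : i = ord0 \/ i = ord_max.
Proof. case: i => [[|[|//]]] Hi; [left|right]; by apply: val_inj. Qed.

Lemma I2_max (i : 'I_2) : (i == ord_max) = (i != ord0).
Proof. by case: (I2_cases i) => ->. Qed.

Definition D0 p (a : {ffun 'I_p -> 'I_2}) : {set 'I_p} :=
  [set y | (a y == ord0) && (a (ord_pred y) != ord0)].
Definition D1 p (a : {ffun 'I_p -> 'I_2}) : {set 'I_p} :=
  [set y | (a y != ord0) && (a (ord_pred y) == ord0)].

Arguments D0 {p}.
Arguments D1 {p}.

Lemma D01_disjoint p (a : {ffun 'I_p -> 'I_2}) : [disjoint D0 a & D1 a].
Proof.
rewrite disjoints_subset; apply/subsetP => y; rewrite !inE.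
by case/andP => -> _.
Qed.

Lemma split_count p (a : 'I_p -> 'I_2) (Q : 'I_p -> bool) (al : 'I_2) :
  (#|[pred y | (a y == al) && Q y]| == #|[pred y | (a (ord_pred y) == al) && Q y]|) =
  (#|[pred y | (a y == al) && (a (ord_pred y) != al) && Q y]| ==
   #|[pred y | (a (ord_pred y) == al) && (a y != al) && Q y]|).
Proof.
rewrite -(@cardID _ [pred y | a (ord_pred y) == al] [pred y | (a y == al) && Q y]).
rewrite -(@cardID _ [pred y | a y == al] [pred y | (a (ord_pred y) == al) && Q y]).
have -> : #|[predI [pred y | (a y == al) && Q y] & [pred y | a (ord_pred y) == al]]|
        = #|[predI [pred y | (a (ord_pred y) == al) && Q y] & [pred y | a y == al]]|.
  apply: eq_card => y; rewrite !inE. by case: (a y == al); case: (a (ord_pred y) == al); case: (Q y).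
rewrite eqn_add2l.
congr (_ == _); apply: eq_card => y; rewrite !inE;
  by case: (a y == al); case: (a (ord_pred y) == al); case: (Q y).
Qed.

Lemma cond_iff p N (a : {ffun 'I_p -> 'I_2}) (b : {ffun 'I_p -> 'I_N}) :
  perm_eq [seq (a y, b y) | y <- enum 'I_p] [seq (a y, b (ordS y)) | y <- enum 'I_p]
  <-> (forall be : 'I_N, #|[pred y | (y \in D0 a) && (b y == be)]| = #|[pred y | (y \in D1 a) && (b y == be)]|).
Proof.
have E1 : forall al be, count_mem (al, be) [seq (a y, b (ordS y)) | y <- enum 'I_p]
    = #|[pred y | (a (ord_pred y) == al) && (b y == be)]|.
  move=> al be. rewrite cnt_map -(@card_pred_shift _ (fun y => (a (ord_pred y) == al) && (b y == be))).
  apply: eq_card => y; by rewrite !inE ordSK.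
have E0 : forall al be, count_mem (al, be) [seq (a y, b y) | y <- enum 'I_p]
    = #|[pred y | (a y == al) && (b y == be)]|.
  by move=> al be; rewrite cnt_map.
have K : forall al be, (count_mem (al, be) [seq (a y, b y) | y <- enum 'I_p] ==
             count_mem (al, be) [seq (a y, b (ordS y)) | y <- enum 'I_p]) =
   (#|[pred y | (y \in D0 a) && (b y == be)]| == #|[pred y | (y \in D1 a) && (b y == be)]|).
  move=> al be. rewrite E0 E1 split_count.
  case: (I2_cases al) => ->.
  - congr (_ == _); apply: eq_card => y; rewrite !inE;
      by case: (a y == ord0); case: (a (ord_pred y) == ord0); case: (b y == be).
  - rewrite eq_sym. congr (_ == _); apply: eq_card => y; rewrite !inE !I2_max;
      by case: (a y == ord0); case: (a (ord_pred y) == ord0); case: (b y == be).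
split.
- move/perm_eq_count => H be. apply/eqP. rewrite -(K ord0). by rewrite H.
- move=> H. apply/perm_eq_count => [[al be]]. apply/eqP. by rewrite K H.
Qed.

Lemma card_pred_shift' p (P : 'I_p -> bool) :
  #|[pred y | P (ord_pred y)]| = #|[pred y | P y]|.
Proof.
rewrite -!sum1_card (reindex_inj (can_inj (@ordSK p))) /=.
apply: eq_bigl => y. by rewrite !inE ordSK.
Qed.

Lemma card_D01 p (a : {ffun 'I_p -> 'I_2}) : #|D0 a| = #|D1 a|.
Proof.
have := @split_count _ a predT ord0.
have -> : #|[pred y | (a y == ord0) && predT y]| == #|[pred y | (a (ord_pred y) == ord0) && predT y]|.
  rewrite (@card_pred_shift' _ (fun y => (a y == ord0) && predT y)). by [].
move/esym/eqP => H.
rewrite /D0 /D1.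
have -> : #|[set y | (a y == ord0) && (a (ord_pred y) != ord0)]| =
  #|[pred y | (a y == ord0) && (a (ord_pred y) != ord0) && predT y]|.
  by apply: eq_card => y; rewrite !inE andbT.
rewrite H. apply: eq_card => y. rewrite !inE andbT.
by case: (a y == ord0); case: (a (ord_pred y) == ord0).
Qed.

Definition Dset p (a : {ffun 'I_p -> 'I_2}) : {set 'I_p} := D0 a :|: D1 a.
Arguments Dset {p}.

Lemma Dset_E p (a : {ffun 'I_p -> 'I_2}) y : (y \in Dset a) = (a y != a (ord_pred y)).
Proof.
rewrite !inE.
by case: (I2_cases (a y)) => ->; case: (I2_cases (a (ord_pred y))) => ->.
Qed.

Lemma card_Dset p (a : {ffun 'I_p -> 'I_2}) : #|Dset a| = 2 * #|D0 a|.
Proof.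
have /eqP -> : #|Dset a| == #|D0 a| + #|D1 a|.
  by rewrite /Dset (leq_card_setU _ _).2 D01_disjoint.
by rewrite -card_D01 addnn -mul2n.
Qed.

Lemma I2_neq (x x' z z' : 'I_2) : z = z' -> (x != z) = (x' != z') -> x = x'.
Proof.
move=> <-.
by case: (I2_cases x) => ->; case: (I2_cases x') => ->; case: (I2_cases z) => ->.
Qed.

Definition phi q (a : {ffun 'I_q.+1 -> 'I_2}) : 'I_2 * {set 'I_q.+1} := (a ord0, Dset a).
Arguments phi {q}.

Lemma phi_inj q : injective (@phi q).
Proof.
move=> a a' [h0 hD]. apply/ffunP => y.
case: y => n Hn.
elim: n Hn => [|n IH] Hn.
  by have -> : Ordinal Hn = ord0 by apply: val_inj.
have Hn' : n < q.+1 by apply: ltnW.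
have Hp : ord_pred (Ordinal Hn) = Ordinal Hn'.
  apply: val_inj => /=. by rewrite modnDr modn_small.
apply: (@I2_neq _ _ (a (Ordinal Hn')) (a' (Ordinal Hn')) (IH Hn')).
by rewrite -Hp -!Dset_E hD.
Qed.

Definition tog q (T : {set 'I_q.+1}) : {set 'I_q.+1} :=
  if ord0 \in T then T :\ ord0 else ord0 |: T.

Lemma togK q : involutive (@tog q).
Proof.
move=> T; rewrite /tog.
case: (boolP (ord0 \in T)) => H.
- by rewrite !inE eqxx /= setD1K.
- by rewrite !inE eqxx /= setU1K.
Qed.

Lemma odd_tog q T : odd #|@tog q T| = ~~ odd #|T|.
Proof.
rewrite /tog. case: (boolP (ord0 \in T)) => H.
- by rewrite [in RHS](cardsD1 ord0) H /= negbK.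
- by rewrite cardsU1 H.
Qed.

Lemma even_sets q : #|[set T : {set 'I_q.+1} | ~~ odd #|T|]| = 2 ^ q.
Proof.
set ev := [set T : {set 'I_q.+1} | ~~ odd #|T|].
have Hc : #|ev| + #|~: ev| = 2 ^ q.+1.
  by rewrite cardsC -cardsT -powersetT card_powerset cardsT card_ord.
have L1 : #|ev| <= #|~: ev|.
  rewrite -(card_imset _ (can_inj (@togK q))).
  apply: subset_leq_card; apply/subsetP => x /imsetP [T]; rewrite !inE => HT ->.
  by rewrite odd_tog HT.
have L2 : #|~: ev| <= #|ev|.
  rewrite -(card_imset _ (can_inj (@togK q))).
  apply: subset_leq_card; apply/subsetP => x /imsetP [T]; rewrite !inE => HT ->.
  by rewrite odd_tog HT.
have E : #|~: ev| = #|ev| by apply/eqP; rewrite eqn_leq L1 L2.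
move: Hc; rewrite E addnn expnS -mul2n => /eqP; rewrite eqn_mul2l /= => /eqP.
done.
Qed.

Lemma card_D0_k q k :
  #|[set a : {ffun 'I_q.+1 -> 'I_2} | #|D0 a| == k]| = 2 * 'C(q.+1, 2 * k).
Proof.
set Ev := [set x : 'I_2 * {set 'I_q.+1} | ~~ odd #|x.2|].
have Him : (@phi q) @: setT = Ev.
  apply/eqP; rewrite eqEcard; apply/andP; split.
  - apply/subsetP => x /imsetP [a _ ->]. by rewrite !inE /phi /= card_Dset mul2n odd_double.
  - rewrite card_imset; last exact: phi_inj.
    have -> : Ev = setX [set: 'I_2] [set T : {set 'I_q.+1} | ~~ odd #|T|].
      by apply/setP => [[x T]]; rewrite !inE.
    by rewrite cardsX even_sets !cardsT card_ffun !card_ord expnS.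
have -> : [set a : {ffun 'I_q.+1 -> 'I_2} | #|D0 a| == k] = [set a | #|(phi a).2| == 2 * k].
  apply/setP => a; rewrite !inE /phi /= card_Dset.
  by rewrite eqn_mul2l.
rewrite -(card_imset _ (@phi_inj q)).
have -> : (@phi q) @: [set a | #|(phi a).2| == 2 * k] = setX [set: 'I_2] [set T : {set 'I_q.+1} | #|T| == 2 * k].
  apply/setP => [[x T]]; rewrite !inE /=.
  apply/imsetP/idP.
  - by case=> a; rewrite inE => H [_ ->].
  - move=> H.
    have : (x, T) \in (@phi q) @: setT by rewrite Him inE /= (eqP H) mul2n odd_double.
    case/imsetP => a _ E. exists a; last by [].
    by move: E; rewrite inE /phi => -[_ <-].
by rewrite cardsX cardsT card_ord card_draws card_ord.
Qed.
Arguments D01_disjoint {p}.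
Arguments card_D01 {p}.
Arguments card_Dset {p}.

From Stdlib Require Import Reals Lra ClassicalEpsilon ZArith FunctionalExtensionality.
From Coquelicot Require Import Coquelicot.
From mathcomp Require Import ssralg ssrnum ssrint Rstruct.
From mathcomp.real_closed Require Import complex.

Open Scope R_scope.

Lemma int01_is_RInt f v : is_RInt f 0 1 v -> int01 f = v.
Proof.
move=> H.
have ex : ex_RInt f 0 1 by exists v.
set pr := ex_RInt_Reals_0 _ _ _ ex.
have Hv : RiemannInt pr = v by rewrite -RInt_Reals; apply: is_RInt_unique.
rewrite /int01.
have P : exists I, forall pr' : Riemann_integrable f 0 1, RiemannInt pr' = I.
  exists v => pr'; rewrite -Hv; apply: RiemannInt_P5.
have := epsilon_spec (inhabits 0) _ P => /(_ pr).
by rewrite Hv.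
Qed.

Lemma sin_Zperiod (x : R) (k : Z) : sin (x + 2 * PI * IZR k) = sin x.
Proof.
destruct k as [|q|q].
- by rewrite Rmult_0_r Rplus_0_r.
- rewrite -[Z.pos q]positive_nat_Z -[IZR (Z.of_nat _)]INR_IZR_INZ.
  have -> : 2 * PI * INR (Pos.to_nat q) = 2 * INR (Pos.to_nat q) * PI by ring.
  by rewrite sin_period.
- rewrite -Pos2Z.opp_pos opp_IZR -[Z.pos q]positive_nat_Z -[IZR (Z.of_nat _)]INR_IZR_INZ.
  set y := x + 2 * PI * - INR (Pos.to_nat q).
  have -> : x = y + 2 * INR (Pos.to_nat q) * PI by rewrite /y; ring.
  by rewrite sin_period.
Qed.

Lemma is_RInt_cos_term (v : R) (k : Z) (phi : R) :
  is_RInt (fun t => v * cos (2 * PI * IZR k * t + phi)) 0 1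
    (if Z.eqb k 0 then v * cos phi else 0).
Proof.
case: (Z.eqb_spec k 0) => [->|Hk].
- apply: (is_RInt_ext (fun _ => v * cos phi)).
    by move=> x _; rewrite Rmult_0_r Rmult_0_l Rplus_0_l.
  have := is_RInt_const 0 1 (v * cos phi).
  rewrite /scal /= /mult /= Rminus_0_r Rmult_1_l. done.
- have Hk' : IZR k <> 0 by apply: not_0_IZR.
  have Hc : 2 * PI * IZR k <> 0.
    by apply: Rmult_integral_contrapositive_currified => //; have := PI_RGT_0; lra.
  set F := fun t => v * sin (2 * PI * IZR k * t + phi) / (2 * PI * IZR k).
  have := @is_RInt_derive R_CompleteNormedModule F (fun t => v * cos (2 * PI * IZR k * t + phi)) 0 1.
  have -> : minus (F 1) (F 0) = 0.
    rewrite /minus /plus /opp /= /F Rmult_1_r Rmult_0_r Rplus_0_l.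
    rewrite (Rplus_comm (2*PI*IZR k)) sin_Zperiod. field; split; [exact: Hk'|exact: PI_neq0].
  move=> H; apply: H.
  + move=> x _; rewrite /F; auto_derive; try done; try (split; [exact: Hk'|exact: PI_neq0]); field; split; [exact: Hk'|exact: PI_neq0].
  + move=> x _. apply: continuous_mult; first exact: continuous_const.
    apply: continuous_comp; last exact: continuous_cos.
    apply: continuous_plus; last exact: continuous_const.
    apply: continuous_mult; first exact: continuous_const.
    exact: continuous_id.
Qed.

Lemma is_RInt_cos_sum (X : Type) (s : seq X) (v : X -> R) (k : X -> Z) (phi : X -> R) :
  is_RInt (fun t => \big[Rplus/0]_(x <- s) (v x * cos (2 * PI * IZR (k x) * t + phi x))) 0 1
    (\big[Rplus/0]_(x <- s) (if Z.eqb (k x) 0 then v x * cos (phi x) else 0)).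
Proof.
elim: s => [|x s IH].
- apply: (is_RInt_ext (fun _ => 0)); first by move=> t _; rewrite big_nil.
  rewrite big_nil.
  have := is_RInt_const 0 1 0.
  by rewrite /scal /= /mult /= Rmult_0_r.
- apply: (is_RInt_ext (fun t => v x * cos (2 * PI * IZR (k x) * t + phi x) +
     \big[Rplus/0]_(x <- s) (v x * cos (2 * PI * IZR (k x) * t + phi x)))).
    by move=> t _; rewrite big_cons.
  rewrite big_cons.
  exact: (is_RInt_plus _ _ _ _ _ _ (is_RInt_cos_term _ _ _) IH).
Qed.

Fixpoint lin (n : nat) (c : nat -> Z) (th : nat -> R) : R :=
  match n with O => 0 | S m => lin m c th + IZR (c m) * th m end.
Fixpoint zb (n : nat) (c : nat -> Z) : bool :=
  match n with O => true | S m => zb m c && Z.eqb (c m) 0 end.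

Lemma lin_upd m c th t : lin m c (upd th m t) = lin m c th.
Proof.
have : forall j, (j <= m)%nat -> lin j c (upd th m t) = lin j c th.
  elim=> [//|j IH] Hj /=. rewrite IH; last by apply: ltnW.
  rewrite /upd. have -> : Nat.eqb j m = false.
    by apply/Nat.eqb_neq => E; move: Hj; rewrite E ltnn.
  done.
by apply.
Qed.

Lemma torus_T (n : nat) (X : Type) (s : seq X) (c : X -> nat -> Z) :
  forall (w : X -> R) (phi : X -> R),
  torus_int n (fun th => \big[Rplus/0]_(x <- s) (w x * cos (2 * PI * lin n (c x) th + phi x)))
  = \big[Rplus/0]_(x <- s) (if zb n (c x) then w x * cos (phi x) else 0).
Proof.
elim: n => [|m IH] w phi /=.
- apply: eq_bigr => x _. by rewrite Rmult_0_r Rplus_0_l.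
- have -> : (fun t => torus_int m (fun th => \big[Rplus/0]_(x <- s)
      (w x * cos (2 * PI * (lin m (c x) (upd th m t) + IZR (c x m) * upd th m t m) + phi x))))
    = (fun t => torus_int m (fun th => \big[Rplus/0]_(x <- s)
      (w x * cos (2 * PI * lin m (c x) th + (2 * PI * IZR (c x m) * t + phi x))))).
    apply: functional_extensionality => t; f_equal.
    apply: functional_extensionality => th; apply: eq_bigr => x _.
    rewrite lin_upd /upd Nat.eqb_refl. f_equal. f_equal. ring.
  under [X in int01 X]functional_extensionality => t do rewrite IH.
  have -> : (fun t => \big[Rplus/0]_(x <- s) (if zb m (c x) then w x * cos (2 * PI * IZR (c x m) * t + phi x) else 0))
    = (fun t => \big[Rplus/0]_(x <- s) ((if zb m (c x) then w x else 0) * cos (2 * PI * IZR (c x m) * t + phi x))).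
    apply: functional_extensionality => t; apply: eq_bigr => x _.
    by case: (zb m (c x)); rewrite ?Rmult_0_l.
  rewrite (@int01_is_RInt _ _ (@is_RInt_cos_sum X s (fun x => if zb m (c x) then w x else 0) (fun x => c x m) phi)).
  apply: eq_bigr => x _.
  by case: (zb m (c x)); case: (Z.eqb (c x m) 0); rewrite /= ?Rmult_0_l.
Qed.

Import GRing.Theory.

HB.instance Definition _ := Monoid.isComLaw.Build Z Z0 Z.add Z.add_assoc Z.add_comm Z.add_0_l.

Definition E (x : R) : R[i] := Complex (cos (2 * PI * x)) (sin (2 * PI * x)).

Lemma mulcE (a b c d : R) : (Complex a b * Complex c d)%R = Complex (a*c - b*d) (a*d + b*c).
Proof. by []. Qed.

Lemma E_add x y : E (x + y) = (E x * E y)%R.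
Proof.
rewrite /E mulcE Rmult_plus_distr_l cos_plus sin_plus.
by rewrite (Rplus_comm (sin _ * cos _)).
Qed.

Lemma E0 : E 0 = 1%R.
Proof. by rewrite /E Rmult_0_r cos_0 sin_0. Qed.

Lemma ReE x : complex.Re (E x) = cos (2 * PI * x).
Proof. by []. Qed.

Lemma E_prod (Y : finType) (u : Y -> R) :
  (\prod_(y : Y) E (u y))%R = E (\sum_(y : Y) u y)%R.
Proof. by rewrite (big_morph E E_add E0). Qed.

Lemma Re_add (x y : R[i]) : complex.Re (x + y)%R = (complex.Re x + complex.Re y).
Proof. by case: x; case: y. Qed.

Lemma Re_sum (I : Type) (r : seq I) (P : pred I) (F : I -> R[i]) :
  complex.Re (\sum_(i <- r | P i) F i)%R = (\sum_(i <- r | P i) complex.Re (F i))%R.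
Proof. by rewrite (big_morph (@complex.Re R) Re_add (erefl (complex.Re (0 : R[i])%R))). Qed.

Lemma lin_sum N c th : lin N c th = (\sum_(l < N) IZR (c l) * th l)%R.
Proof.
elim: N => [|N IH] /=; first by rewrite big_ord0.
by rewrite big_ord_recr /= IH.
Qed.

Definition coef (N : nat) (Y : finType) (s : Y -> Z) (b : {ffun Y -> 'I_N}) (l : nat) : Z :=
  \big[Z.add/Z0]_(y : Y) (if nat_of_ord (b y) == l then s y else Z0).

Arguments coef {N Y}.

Lemma IZR_sum (I : Type) (r : seq I) (F : I -> Z) :
  IZR (\big[Z.add/Z0]_(i <- r) F i) = (\sum_(i <- r) IZR (F i))%R.
Proof. by rewrite (big_morph IZR plus_IZR (erefl (IZR Z0))). Qed.

Lemma lin_coef N (Y : finType) (s : Y -> Z) (b : {ffun Y -> 'I_N}) th :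
  lin N (coef s b) th = (\sum_(y : Y) IZR (s y) * th (b y))%R.
Proof.
rewrite lin_sum.
under eq_bigr => l _ do rewrite /coef IZR_sum GRing.mulr_suml.
rewrite exchange_big /=. apply: eq_bigr => y _.
rewrite (bigD1 (b y)) //= eqxx big1 ?GRing.addr0 // => l /negbTE Hl.
have -> : (nat_of_ord (b y) == nat_of_ord l) = false by rewrite eq_sym; exact: Hl.
by rewrite GRing.mul0r.
Qed.

Lemma TG N (Y : finType) (s : Y -> Z) (w : R) :
  torus_int N (fun th => w * complex.Re (\prod_(y : Y) \sum_(be < N) E (IZR (s y) * th be))%R)
  = w * INR #|[set b : {ffun Y -> 'I_N} | zb N (coef s b)]|.
Proof.
have H : forall th : nat -> R, w * complex.Re (\prod_(y : Y) \sum_(be < N) E (IZR (s y) * th be))%R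
   = \big[Rplus/0]_(b <- index_enum {ffun Y -> 'I_N}) ((fun _ => w) b * cos (2 * PI * lin N (coef s b) th + (fun _ => 0) b)).
  move=> th. rewrite bigA_distr_bigA Re_sum [w * _]RmultE GRing.mulr_sumr.
  apply: eq_bigr => b _. rewrite E_prod ReE lin_coef Rplus_0_r. done.
rewrite (functional_extensionality _ _ H) torus_T.
rewrite INRE -GRing.mulr_natr -(@GRing.sumr_const R).
rewrite cos_0 GRing.mul1r [X in _ = X]RmultE GRing.mulr_sumr [RHS]big_mkcond /=.
apply: eq_bigr => b _. by rewrite inE; case: (zb N (coef s b)).
Qed.

Definition zp N (th : nat -> R) : R[i] := (\sum_(be < N) E (th be))%R.
Definition zm N (th : nat -> R) : R[i] := (\sum_(be < N) E (- th be))%R.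

Lemma Im_add (x y : R[i]) : complex.Im (x + y)%R = (complex.Im x + complex.Im y).
Proof. by case: x; case: y. Qed.

Lemma Im_sum (I : Type) (r : seq I) (P : pred I) (F : I -> R[i]) :
  complex.Im (\sum_(i <- r | P i) F i)%R = (\sum_(i <- r | P i) complex.Im (F i))%R.
Proof. by rewrite (big_morph (@complex.Im R) Im_add (erefl (complex.Im (0 : R[i])%R))). Qed.

Lemma rsum_sum N f : rsum N f = (\sum_(i < N) f i)%R.
Proof.
by rewrite /rsum foldrE big_map -(subn0 N) -/(index_iota 0 N) big_mkord subn0.
Qed.

Lemma zpzm N th :
  (zp N th * zm N th)%R =
  Complex ((rsum N (fun j => cos (2 * PI * th j)))^2 + (rsum N (fun j => sin (2 * PI * th j)))^2) 0.
Proof.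
have -> : zp N th = Complex (rsum N (fun j => cos (2 * PI * th j))) (rsum N (fun j => sin (2 * PI * th j))).
  have H1 : complex.Re (zp N th) = rsum N (fun j => cos (2 * PI * th j)).
    by rewrite rsum_sum /zp Re_sum.
  have H2 : complex.Im (zp N th) = rsum N (fun j => sin (2 * PI * th j)).
    by rewrite rsum_sum /zp Im_sum.
  by case: (zp N th) H1 H2 => a b /= -> ->.
have -> : zm N th = Complex (rsum N (fun j => cos (2 * PI * th j))) (- rsum N (fun j => sin (2 * PI * th j))).
  have H1 : complex.Re (zm N th) = rsum N (fun j => cos (2 * PI * th j)).
    rewrite rsum_sum /zm Re_sum; apply: eq_bigr => i _; rewrite ReE.
    by rewrite Ropp_mult_distr_r_reverse cos_neg.
  have H2 : complex.Im (zm N th) = - rsum N (fun j => sin (2 * PI * th j)).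
    rewrite rsum_sum /zm Im_sum RoppE -sumrN; apply: eq_bigr => i _ /=.
    by rewrite Ropp_mult_distr_r_reverse sin_neg.
  by case: (zm N th) H1 H2 => a b /= -> ->.
rewrite mulcE. f_equal; rewrite -?RplusE -?RmultE -?RminusE -?RoppE -?R0E -?R1E /=; ring.
Qed.

Lemma expC0 (x : R) k : (Complex x 0 ^+ k)%R = Complex (x ^ k) 0.
Proof.
elim: k => [|k IH] //=. rewrite exprS IH mulcE. f_equal; rewrite -?RplusE -?RmultE -?RminusE -?RoppE -?R0E -?R1E /=; ring.
Qed.

Definition s2 (k : nat) (y : 'I_k + 'I_k) : Z := if y is inl _ then Zpos xH else Zneg xH.
Arguments s2 {k}.

Lemma prod_s2 k N (th : nat -> R) :
  (\prod_(y : 'I_k + 'I_k) \sum_(be < N) E (IZR (s2 y) * th be))%R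
  = (zp N th ^+ k * zm N th ^+ k)%R.
Proof.
rewrite big_sumType /= !prodr_const !card_ord /zp /zm.
f_equal; f_equal; apply: eq_bigr => i _; f_equal; ring.
Qed.

Lemma mean_pow N k th : (1 <= N)%nat ->
  mean_abs N th ^ (2 * k) =
  / INR N ^ (2 * k) * complex.Re (\prod_(y : 'I_k + 'I_k) \sum_(be < N) E (IZR (s2 y) * th be))%R.
Proof.
move=> HN.
have HN' : INR N <> 0 by apply: not_0_INR; move: HN; case: N.
rewrite prod_s2 -exprMn zpzm expC0 /= /mean_abs pow_mult pow2_sqrt; last first.
  by apply: Rplus_le_le_0_compat; apply: pow2_ge_0.
set A := rsum N _. set B := rsum N _.
have -> : (A / INR N) ^ 2 + (B / INR N) ^ 2 = (A ^ 2 + B ^ 2) * (/ INR N) ^ 2 by field.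
by rewrite Rpow_mult_distr -pow_mult pow_inv Rmult_comm.
Qed.

Definition sAB (Y : finType) (A B : {set Y}) (y : Y) : Z :=
  if y \in A then Zpos xH else if y \in B then Zneg xH else Z0.
Arguments sAB {Y}.

Lemma natC n : (n%:R : R[i])%R = Complex (INR n) 0.
Proof.
elim: n => [|n IH] //. rewrite S_INR -addn1 GRing.natrD IH.
have -> : (1%:R : R[i])%R = Complex 1 0 by [].
have -> : (Complex (INR n) 0 + Complex 1 0)%R = Complex (INR n + 1) (0 + 0) by [].
by rewrite Rplus_0_r.
Qed.

Lemma prod_sAB (Y : finType) (A B : {set Y}) N (th : nat -> R) :
  [disjoint A & B] ->
  (\prod_(y : Y) \sum_(be < N) E (IZR (sAB A B y) * th be))%R
  = (zp N th ^+ #|A| * zm N th ^+ #|B| * (N%:R) ^+ #|~: (A :|: B)|)%R.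
Proof.
move=> dAB.
rewrite (bigID (mem A)) /= [X in (_ * X)%R](bigID (mem B)) /=.
rewrite [X in (_ * (X * _))%R](eq_bigl (mem B)); last first.
  move=> y /=. case yB: (y \in B); rewrite ?andbF ?andbT //.
  have nA : y \notin A.
    by apply/negP => yA; move: dAB; rewrite disjoints_subset => /subsetP /(_ _ yA); rewrite inE yB.
  by rewrite nA.
rewrite [X in (_ * (_ * X))%R](eq_bigl (mem (~: (A :|: B)))); last first.
  by move=> y /=; rewrite !inE negb_or.
rewrite -GRing.mulrA.
f_equal; last f_equal.
- rewrite -(prodr_const (mem A)). apply: eq_bigr => y yA0.
  have yA : y \in A := yA0.
  rewrite /sAB yA /zp. apply: eq_bigr => be _. by rewrite Rmult_1_l.
- rewrite -(prodr_const (mem B)). apply: eq_bigr => y yB0.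
  have yB : y \in B := yB0.
  have yA : (y \in A) = false.
    by apply/negP => yA; move: dAB; rewrite disjoints_subset => /subsetP /(_ _ yA); rewrite inE yB.
  rewrite /sAB yA yB /zm. apply: eq_bigr => be _. f_equal. ring.
- rewrite -(prodr_const (mem (~: (A :|: B)))). apply: eq_bigr => y.
  rewrite !inE negb_or => /andP [/negbTE yA /negbTE yB].
  rewrite /sAB yA yB.
  under eq_bigr => be _ do rewrite Rmult_0_l E0.
  by rewrite sumr_const card_ord.
Qed.

Lemma Re_mulC (w : R[i]) (c : R) : complex.Re (w * Complex c 0)%R = complex.Re w * c.
Proof. case: w => a b. rewrite mulcE /=. rewrite -?RplusE -?RmultE -?RminusE -?RoppE -?R0E; ring. Qed.

Lemma count_bridge (Y : finType) (A B : {set Y}) N r :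
  [disjoint A & B] -> #|A| = r -> #|B| = r ->
  INR #|[set b : {ffun Y -> 'I_N} | zb N (coef (sAB A B) b)]|
  = INR N ^ #|~: (A :|: B)| * INR #|[set b : {ffun 'I_r + 'I_r -> 'I_N} | zb N (coef s2 b)]|.
Proof.
move=> dAB hA hB.
rewrite -[LHS]Rmult_1_l -!TG. f_equal.
apply: functional_extensionality => th.
rewrite prod_sAB // prod_s2 hA hB natC expC0 Re_mulC. by rewrite Rmult_1_l Rmult_comm.
Qed.

Lemma zbP n c : zb n c <-> (forall l, (l < n)%nat -> c l = Z0).
Proof.
elim: n => [|n IH] /=; first by split => // _ l.
split.
- case/andP => /IH H /Z.eqb_spec H1 l. rewrite ltnS leq_eqVlt => /orP [/eqP -> //|]. exact: H.
- move=> H. apply/andP; split.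
  + apply/IH => l Hl. apply: H. exact: ltnW.
  + apply/Z.eqb_spec. exact: H.
Qed.

Lemma sum_indic (Y : finType) (P : pred Y) :
  (\sum_(y : Y) (if P y then (1 : R)%R else (0 : R)%R) = #|P|%:R)%R.
Proof.
have -> : (\sum_(y : Y) (if P y then (1 : R)%R else (0 : R)%R) = \sum_(y in P) 1%R)%R by rewrite [RHS]big_mkcond; apply: eq_bigr => y _; rewrite unfold_in.
by rewrite sumr_const.
Qed.

Lemma IZR_coef (Y : finType) (A B : {set Y}) N (b : {ffun Y -> 'I_N}) (l : nat) :
  [disjoint A & B] ->
  IZR (coef (sAB A B) b l) =
  (#|[pred y | (y \in A) && (nat_of_ord (b y) == l)]|%:R - #|[pred y | (y \in B) && (nat_of_ord (b y) == l)]|%:R)%R.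
Proof.
move=> dAB.
rewrite /coef IZR_sum -!sum_indic -sumrB. apply: eq_bigr => y _.
rewrite /sAB. case: (boolP (nat_of_ord (b y) == l)) => Hl; last first.
  by rewrite !inE (negbTE Hl) !andbF R0E subr0.
rewrite !inE Hl !andbT.
case yA: (y \in A).
- have -> : (y \in B) = false.
    apply/negP => yB; move: dAB; rewrite disjoints_subset => /subsetP /(_ _ yA).
    by rewrite inE yB.
  by rewrite R1E subr0.
- case: (y \in B) => /=; last by rewrite R0E subr0.
  by rewrite sub0r.
Qed.

Lemma zb_iff p N (a : {ffun 'I_p -> 'I_2}) (b : {ffun 'I_p -> 'I_N}) :
  zb N (coef (sAB (D0 a) (D1 a)) b) <->
  (forall be : 'I_N, #|[pred y | (y \in D0 a) && (b y == be)]| = #|[pred y | (y \in D1 a) && (b y == be)]|).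
Proof.
rewrite zbP. split.
- move=> H be. have := H _ (ltn_ord be).
  move/(f_equal IZR). rewrite IZR_coef ?D01_disjoint // R0E.
  move/eqP; rewrite subr_eq0 Num.Theory.eqr_nat => /eqP. done.
- move=> H l Hl. apply: eq_IZR. rewrite IZR_coef ?D01_disjoint // R0E.
  apply/eqP; rewrite subr_eq0 Num.Theory.eqr_nat. apply/eqP.
  exact: (H (Ordinal Hl)).
Qed.

Definition bal N k := #|[set b : {ffun 'I_k + 'I_k -> 'I_N} | zb N (coef s2 b)]|.

Lemma count_a q N (a : {ffun 'I_q.+1 -> 'I_2}) :
  INR #|[set b : {ffun 'I_q.+1 -> 'I_N} | perm_eq [seq (a y, b y) | y <- enum 'I_q.+1]
                                             [seq (a y, b (ordS y)) | y <- enum 'I_q.+1]]|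
  = INR N ^ (q.+1 - 2 * #|D0 a|) * INR (bal N #|D0 a|).
Proof.
have -> : #|[set b : {ffun 'I_q.+1 -> 'I_N} | perm_eq [seq (a y, b y) | y <- enum 'I_q.+1]
                                             [seq (a y, b (ordS y)) | y <- enum 'I_q.+1]]|
   = #|[set b : {ffun 'I_q.+1 -> 'I_N} | zb N (coef (sAB (D0 a) (D1 a)) b)]|.
  apply: eq_card => b; rewrite !inE. apply/idP/idP.
  - by move/cond_iff/zb_iff.
  - by move/zb_iff/cond_iff.
rewrite (@count_bridge _ (D0 a) (D1 a) N #|D0 a| (D01_disjoint a) (erefl _) (esym (card_D01 a))).
have -> : #|~: (D0 a :|: D1 a)| = (q.+1 - 2 * #|D0 a|)%nat.
  have := cardsC (D0 a :|: D1 a). rewrite -/(Dset a) card_Dset => H.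
  by rewrite -[X in (X - _)%nat](card_ord q.+1) -H addKn.
done.
Qed.

Lemma dc_sum q N :
  delta_count 2 N q.+1 = (\sum_(a : {ffun 'I_q.+1 -> 'I_2})
     #|[set b : {ffun 'I_q.+1 -> 'I_N} | perm_eq [seq (a y, b y) | y <- enum 'I_q.+1]
                                             [seq (a y, b (ordS y)) | y <- enum 'I_q.+1]]|)%N.
Proof.
rewrite /delta_count -sum1_card big_mkcond /=.
under [RHS]eq_bigr => a _ do rewrite -sum1_card big_mkcond /=.
rewrite pair_bigA /=. apply: eq_bigr => [[a b]] _. by rewrite !inE.
Qed.

Lemma mean_int N k : (1 <= N)%nat ->
  torus_int N (fun th => mean_abs N th ^ (2 * k)) = / INR N ^ (2 * k) * INR (bal N k).
Proof.
move=> HN. rewrite -TG. f_equal. apply: functional_extensionality => th.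
exact: mean_pow.
Qed.

Lemma INR_sum (I : Type) (r : seq I) (P : pred I) (F : I -> nat) :
  INR (\sum_(i <- r | P i) F i)%N = (\sum_(i <- r | P i) INR (F i))%R.
Proof. by rewrite (big_morph INR plus_INR (erefl (INR 0))). Qed.

Lemma sum_f_R0_big (f : nat -> R) n : sum_f_R0 f n = (\sum_(k < n.+1) f k)%R.
Proof.
elim: n => [|n IH] /=; first by rewrite big_ord_recr big_ord0 /= add0r.
by rewrite IH [in RHS]big_ord_recr.
Qed.

Lemma group_sum q (F : nat -> R) :
  (\sum_(a : {ffun 'I_q.+1 -> 'I_2}) F #|D0 a|)%R
  = (\sum_(k < q.+2) INR (2 * 'C(q.+1, 2 * k)) * F k)%R.
Proof.
rewrite (partition_big (fun a => (inord #|D0 a| : 'I_q.+2)) xpredT) //=.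
apply: eq_bigr => k _.
have Hb : forall a : {ffun 'I_q.+1 -> 'I_2}, (#|D0 a| <= q.+1)%nat.
  by move=> a; have := max_card (mem (D0 a)); rewrite card_ord.
rewrite (eq_bigr (fun _ => F k)); last first.
  move=> a /eqP <-. rewrite inordK //. by rewrite ltnS Hb.
rewrite (eq_bigl (mem [set a : {ffun 'I_q.+1 -> 'I_2} | #|D0 a| == k])); last first.
  move=> a /=; rewrite !inE.
  apply/eqP/eqP => [<-|H]; first by rewrite inordK // ltnS Hb.
  by apply: val_inj; rewrite /= inordK // ltnS Hb.
rewrite sumr_const card_D0_k -mulr_natr INRE. exact: mulrC.
Qed.

Theorem proposition6p2 (N p : nat) (hN : (1 <= N)%nat) (hp : (1 <= p)%nat) :
  delta p 2 N =
  / 2 ^ (p - 1) *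
  sum_f_R0 (fun k => INR 'C(p, 2 * k) *
                     torus_int N (fun th => mean_abs N th ^ (2 * k))) p.
Proof.
case: p hp => [//|q] _.
rewrite /delta dc_sum INR_sum.
under eq_bigr => a _ do rewrite count_a.
rewrite (group_sum q (fun r => INR N ^ (q.+1 - 2 * r) * INR (bal N r))).
rewrite sum_f_R0_big.
under [in RHS]eq_bigr => k _ do rewrite mean_int //.
rewrite /Rdiv RmultE mulr_suml [X in _ = X]RmultE mulr_sumr.
apply: eq_bigr => k _.
have HN' : INR N <> 0 by apply: not_0_INR; move: hN; case: N.
rewrite -?RmultE.
have H2 : INR 2 = 2 by rewrite /= ; ring.
rewrite mult_INR H2 subSS subn0.
case: (leqP (2 * k) q.+1) => Hk.
- have -> : (2 * INR N) ^ q.+1 = 2 * 2 ^ q * (INR N ^ (q.+1 - 2 * k) * INR N ^ (2 * k)).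
    rewrite -pow_add plusE subnK // Rpow_mult_distr. simpl. ring.
  field. split; [exact: pow_nonzero|split; [exact: pow_nonzero|]].
  apply: pow_nonzero; lra.
- rewrite bin_small // /=. ring.
Qed.
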